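(* Let $\mathbb{K}\in\{\mathbb{R},\mathbb{C}\}$, $X:=\mathbb{K}^n$ with $\langle\mathbf{x},\mathbf{y}\rangle_X:=\langle\mathbf{R}_X\mathbf{x},\mathbf{y}\rangle$ for a self-adjoint positive definite $\mathbf{R}_X$, and dual norm $\|\mathbf{y}'\|_{X'}:=\langle\mathbf{y}',\mathbf{R}_X^{-1}\mathbf{y}'\rangle^{1/2}$. Let $Z\subseteq Y\subseteq X$ be subspaces and $Y':=\{\mathbf{R}_X\mathbf{y}:\mathbf{y}\in Y\}$. Let $\mathbf{\Theta}\in\mathbb{K}^{k\times n}$ satisfy, for some $\varepsilon\in[0,1)$, $|\langle\mathbf{x},\mathbf{y}\rangle_X-\langle\mathbf{\Theta}\mathbf{x},\mathbf{\Theta}\mathbf{y}\rangle|\le\varepsilon\|\mathbf{x}\|_X\|\mathbf{y}\|_X$ for all $\mathbf{x},\mathbf{y}\in Y$. For $\mathbf{y}'\in Y'$ define $$\|\mathbf{y}'\|_{Z'}:=\max_{\mathbf{x}\in Z\setminus\{\mathbf{0}\}}\frac{|\langle\mathbf{y}',\mathbf{x}\rangle|}{\|\mathbf{x}\|_X},\qquad\|\mathbf{y}'\|_{Z'}^{\mathbf{\Theta}}:=\max_{\mathbf{x}\in Z\setminus\{\mathbf{0}\}}\frac{|\langle\mathbf{\Theta}\mathbf{R}_X^{-1}\mathbf{y}',\mathbf{\Theta}\mathbf{x}\rangle|}{\|\mathbf{\Theta}\mathbf{x}\|}.$$ Then for all $\mathbf{y}'\in Y'$, $$\frac{1}{\s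qrt{1+\varepsilon}}\big(\|\mathbf{y}'\|_{Z'}-\varepsilon\|\mathbf{y}'\|_{X'}\big)\le\|\mathbf{y}'\|_{Z'}^{\mathbf{\Theta}}\le\frac{1}{\sqrt{1-\varepsilon}}\big(\|\mathbf{y}'\|_{Z'}+\varepsilon\|\mathbf{y}'\|_{X'}\big).$$
   Context: $\langle\mathbf{x},\mathbf{y}\rangle=\mathbf{x}^{\mathrm{H}}\mathbf{y}$ is the canonical inner product and $\|\cdot\|$ the Euclidean norm; $\|\cdot\|_X$ is the norm induced by $\langle\cdot,\cdot\rangle_X$. *)

(* Defs.v *)
From HB Require Import structures.
From mathcomp Require Import all_boot all_order all_algebra.
From mathcomp Require Import classical_sets reals.
From mathcomp Require Import complex.

Set Implicit Arguments.
Unset Strict Implicit.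
Unset Printing Implicit Defensive.

Import Order.TTheory GRing.Theory Num.Theory.
Local Open Scope ring_scope.
Local Open Scope classical_set_scope.

(* Generic setting: R is the real field; K is the scalar field (K = R or
   K = R[i]), with conjugation [conj] (identity for K = R) and modulus
   [absK : K -> R]. Subspaces of
   K^n are represented by matrices whose row spaces (mxalgebra) contain the
   transposed vectors. *)
Section Generic.
Variables (R : realType) (K : numFieldType) (conj : K -> K) (absK : K -> R).

Definition dotK n (x y : 'cV[K]_n) : K := \sum_(i < n) conj (x i 0) * y i 0.

Definition enorm n (x : 'cV[K]_n) : R := Num.sqrt (absK (dotK x x)).

Definition inSub n (S : 'M[K]_n) (x : 'cV[K]_n) : Prop := (x^T <= S)%MS.

Definition dotX n (RX : 'M[K]_n) (x y : 'cV[K]_n) : K := dotK (RX *m x) y.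
Definition normX n (RX : 'M[K]_n) (x : 'cV[K]_n) : R :=
  Num.sqrt (absK (dotX RX x x)).

Definition normXd n (RX : 'M[K]_n) (y' : 'cV[K]_n) : R :=
  Num.sqrt (absK (dotK y' (invmx RX *m y'))).

Definition normZd n (RX Z : 'M[K]_n) (y' : 'cV[K]_n) : R :=
  sup [set r : R | exists x : 'cV[K]_n,
        [/\ inSub Z x, x != 0 & r = absK (dotK y' x) / normX RX x]].

Definition normZdTheta n k (RX Z : 'M[K]_n) (Theta : 'M[K]_(k, n))
    (y' : 'cV[K]_n) : R :=
  sup [set r : R | exists x : 'cV[K]_n,
        [/\ inSub Z x, x != 0 &
            r = absK (dotK (Theta *m (invmx RX *m y')) (Theta *m x))
                / enorm (Theta *m x)]].

Definition selfadjoint n (M : 'M[K]_n) : Prop :=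
  forall i j, M j i = conj (M i j).
Definition posdef n (M : 'M[K]_n) : Prop :=
  forall x : 'cV[K]_n, x != 0 -> 0 < dotK (M *m x) x.

Definition prop34_stmt : Prop :=
  forall (n k : nat) (RX : 'M[K]_n) (Y Z : 'M[K]_n) (Theta : 'M[K]_(k, n))
         (eps : R),
    selfadjoint RX -> posdef RX ->
    (Z <= Y)%MS ->
    0 <= eps -> eps < 1 ->
    (forall x y : 'cV[K]_n, inSub Y x -> inSub Y y ->
        absK (dotX RX x y - dotK (Theta *m x) (Theta *m y))
          <= eps * normX RX x * normX RX y) ->
    forall y' : 'cV[K]_n, (exists y, inSub Y y /\ y' = RX *m y) ->
      (Num.sqrt (1 + eps))^-1 * (normZd RX Z y' - eps * normXd RX y')
        <= normZdTheta RX Z Theta y' /\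
      normZdTheta RX Z Theta y'
        <= (Num.sqrt (1 - eps))^-1 * (normZd RX Z y' + eps * normXd RX y').

End Generic.

Definition prop34_real (R : realType) : Prop :=
  @prop34_stmt R R id (fun z : R => `|z|).
Definition prop34_complex (R : realType) : Prop :=
  @prop34_stmt R (R[i]) (@conjc R) (@ComplexField.Normc.normc R).

(* Main.v *)
Require Import Defs.
From HB Require Import structures.
From mathcomp Require Import all_boot all_order all_algebra.
From mathcomp Require Import classical_sets reals boolp.
From mathcomp Require Import complex.
From mathcomp Require Import ring lra.
Set Implicit Arguments.
Unset Strict Implicit.
Unset Printing Implicit Defensive.
Import Order.TTheory GRing.Theory Num.Theory.
Local Open Scope ring_scope.
Local Open Scope classical_set_scope.

Lemma ring_aux (K : numFieldType) (a b c d : K) :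
  a * (a * d) - a * (b * c) + (- (c * (a * b)) - - (c * (b * a))) =
  a * (a * d - c * b).
Proof. ring. Qed.

Lemma scal_ineq (R : realFieldType) (p q nX nT ny e s1 s2 tY : R) :
 0 <= p -> 0 <= q -> 0 < nX -> 0 < nT -> 0 <= e -> 0 <= ny -> 0 < s1 -> 0 < s2 ->
 p <= q + e*ny*nX -> q <= p + e*ny*nX -> nT <= s1 * nX -> s2 * nX <= nT ->
 q <= tY * nT ->
 [/\ p/nX <= s1 * (q/nT) + e*ny, q/nT <= (p/nX + e*ny)/s2 & q/nT <= tY].
Proof.
move=> p0 q0 nX0 nT0 e0 ny0 s10 s20 h1 h2 h3 h4 h5.
set u := q / nT; set v := p / nX.
have Eq : q = u * nT by rewrite /u divfK // gt_eqF.
have Ep : p = v * nX by rewrite /v divfK // gt_eqF.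
have u0 : 0 <= u by rewrite /u divr_ge0 // ltW.
have v0 : 0 <= v by rewrite /v divr_ge0 // ltW.
rewrite Eq Ep in h1 h2 h5.
split.
- rewrite -(ler_pM2r nX0).
  have : u * nT <= u * (s1 * nX) by rewrite ler_wpM2l.
  move: h1; nra.
- rewrite ler_pdivlMr // -(ler_pM2r nX0).
  have : u * (s2 * nX) <= u * nT by rewrite ler_wpM2l.
  move: h2; nra.
- by rewrite -(ler_pM2r nT0).
Qed.

Section Gen.
Variables (R : realType) (K : numFieldType) (cj : K -> K) (absK : K -> R)
  (emb : {rmorphism R -> K}).
Hypothesis conjD : forall x y, cj (x + y) = cj x + cj y.
Hypothesis conjM : forall x y, cj (x * y) = cj x * cj y.
Hypothesis conjK : forall x, cj (cj x) = x.
Hypothesis conj_emb : forall r, cj (emb r) = emb r.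
Hypothesis conj_norm : forall z, cj z * z = `|z| ^+ 2.
Hypothesis emb_norm : forall z, emb (absK z) = `|z|.
Hypothesis ler_emb : forall a b, (emb a <= emb b) = (a <= b).

Lemma ltr_emb a b : (emb a < emb b) = (a < b).
Proof. by rewrite !lt_def ler_emb (inj_eq (fmorph_inj emb)). Qed.

Lemma absK_ge0 z : 0 <= absK z.
Proof. by rewrite -ler_emb rmorph0 emb_norm normr_ge0. Qed.

Lemma absK_tri u v : absK (u + v) <= absK u + absK v.
Proof. by rewrite -ler_emb rmorphD !emb_norm ler_normD. Qed.

Lemma absKN u : absK (- u) = absK u.
Proof. by apply: (fmorph_inj emb); rewrite !emb_norm normrN. Qed.

Lemma absK_pos z : 0 <= z -> emb (absK z) = z.
Proof. by move=> z0; rewrite emb_norm ger0_norm. Qed.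

Lemma absK_emb r : absK (emb r) = `|r|.
Proof.
apply: (fmorph_inj emb); rewrite emb_norm.
have [r0|r0] := leP 0 r.
  by rewrite !ger0_norm // -(rmorph0 emb) ler_emb.
rewrite !ltr0_norm ?rmorphN // -(rmorph0 emb) ltr_emb //.
Qed.

Lemma absK_eq0 z : absK z = 0 -> z = 0.
Proof.
by move=> h; apply/normr0_eq0; rewrite -emb_norm h rmorph0.
Qed.

Lemma absK_rev u v : absK u - absK v <= absK (u - v).
Proof.
have := absK_tri (u - v) v; rewrite subrK; lra.
Qed.

Lemma conj0 : cj 0 = 0.
Proof. by rewrite -(rmorph0 emb) conj_emb. Qed.
Lemma conj1 : cj 1 = 1.
Proof. by rewrite -(rmorph1 emb) conj_emb. Qed.
Lemma conjN x : cj (- x) = - cj x.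
Proof. by apply/eqP; rewrite -subr_eq0 opprK -conjD addNr conj0. Qed.

Lemma conj_sum n (F : 'I_n -> K) : cj (\sum_(i < n) F i) = \sum_(i < n) cj (F i).
Proof. exact: (big_morph cj conjD conj0). Qed.

Lemma dotK_conj n (x y : 'cV[K]_n) : cj (dotK cj x y) = dotK cj y x.
Proof.
rewrite /dotK conj_sum; apply: eq_bigr => i _.
by rewrite conjM conjK mulrC.
Qed.

Lemma dotKDl n (x y z : 'cV[K]_n) : dotK cj (x + y) z = dotK cj x z + dotK cj y z.
Proof. by rewrite /dotK -big_split; apply: eq_bigr => i _; rewrite mxE conjD mulrDl. Qed.
Lemma dotKDr n (x y z : 'cV[K]_n) : dotK cj z (x + y) = dotK cj z x + dotK cj z y.
Proof. by rewrite /dotK -big_split; apply: eq_bigr => i _; rewrite mxE mulrDr. Qed.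
Lemma dotKZl n c (x z : 'cV[K]_n) : dotK cj (c *: x) z = cj c * dotK cj x z.
Proof. by rewrite /dotK mulr_sumr; apply: eq_bigr => i _; rewrite mxE conjM mulrA. Qed.
Lemma dotKZr n c (x z : 'cV[K]_n) : dotK cj z (c *: x) = c * dotK cj z x.
Proof. by rewrite /dotK mulr_sumr; apply: eq_bigr => i _; rewrite mxE mulrCA. Qed.
Lemma dotKNl n (x z : 'cV[K]_n) : dotK cj (- x) z = - dotK cj x z.
Proof. by rewrite -scaleN1r dotKZl conjN conj1 mulN1r. Qed.
Lemma dotKNr n (x z : 'cV[K]_n) : dotK cj z (- x) = - dotK cj z x.
Proof. by rewrite -scaleN1r dotKZr mulN1r. Qed.
Lemma dotK0l n (z : 'cV[K]_n) : dotK cj 0 z = 0.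
Proof. by rewrite -(scale0r 0) dotKZl conj0 mul0r. Qed.
Lemma dotK0r n (z : 'cV[K]_n) : dotK cj z 0 = 0.
Proof. by rewrite -(scale0r 0) dotKZr mul0r. Qed.

Lemma dotK_ge0 n (x : 'cV[K]_n) : 0 <= dotK cj x x.
Proof. by apply: sumr_ge0 => i _; rewrite conj_norm exprn_ge0. Qed.

Lemma dotK_eq0 n (x : 'cV[K]_n) : dotK cj x x = 0 -> x = 0.
Proof.
move=> h; apply/matrixP => i j; rewrite (ord1 j) mxE.
have := @psumr_eq0P _ _ _ _ _ h i isT.
rewrite conj_norm => /(_ _)/eqP; rewrite expf_eq0 /= normr_eq0 => /(_ _)/eqP.
apply=> k _; by rewrite conj_norm exprn_ge0.
Qed.

Lemma absK0 : absK 0 = 0.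
Proof. by rewrite -(rmorph0 emb) absK_emb normr0. Qed.

Lemma dotK_CS n (a b : 'cV[K]_n) :
  absK (dotK cj a b) <= enorm cj absK a * enorm cj absK b.
Proof.
set al := dotK cj a a; set be := dotK cj a b; set B := dotK cj b b.
have Ea : al = emb (absK al) by rewrite absK_pos // dotK_ge0.
suff h : absK be ^+ 2 <= absK al * absK B.
  rewrite /enorm -sqrtrM ?absK_ge0 // -(ger0_norm (absK_ge0 be)) -sqrtr_sqr.
  by rewrite ler_sqrt // mulr_ge0 // absK_ge0.
have [a0|anz] := eqVneq a 0.
  by rewrite /be a0 dotK0l absK0 expr0n /= mulr_ge0 // absK_ge0.
have alpos : 0 < absK al.
  rewrite lt_def absK_ge0 andbT; apply/eqP => /absK_eq0 /dotK_eq0 a0.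
  by rewrite a0 eqxx in anz.
have ca : cj al = al by rewrite Ea conj_emb -Ea.
have key : dotK cj (al *: b - be *: a) (al *: b - be *: a)
    = al * (al * B - cj be * be).
  rewrite dotKDl !dotKDr !dotKNl !dotKNr !dotKZl !dotKZr.
  have hba : dotK cj b a = cj be by rewrite /be dotK_conj.
  by rewrite hba -/al -/be -/B ca ring_aux.
have := dotK_ge0 (al *: b - be *: a); rewrite key pmulr_rge0; last first.
  by rewrite Ea -(rmorph0 emb) ltr_emb.
rewrite subr_ge0 conj_norm -emb_norm -rmorphXn.
  move=> h; rewrite -ler_emb rmorphM (absK_pos (dotK_ge0 b)) -Ea; exact: h.
Qed.

Lemma posdef_unit n (RX : 'M[K]_n) : posdef cj RX -> RX \in unitmx.
Proof.
move=> Hpd; apply/negPn/negP => nu.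
have : \det RX^T == 0.
  by rewrite det_tr; move: nu; rewrite unitmxE unitfE negbK.
case/det0P => v vnz hv.
have h := Hpd (v^T); rewrite trmx_eq0 in h; have {h} := h vnz.
have -> : RX *m v^T = 0 by rewrite -[RX]trmxK -trmx_mul hv trmx0.
by rewrite dotK0l ltxx.
Qed.

Theorem gen_main : prop34_stmt cj absK.
Proof.
move=> n k RX Y Z Th eps _ Hpd HZY e0 e1 Hth y' [y [Hy ->]].
have uRX := posdef_unit Hpd.
rewrite /normXd /normZdTheta mulKmx //.
have -> : Num.sqrt (absK (dotK cj (RX *m y) y)) = normX cj absK RX y by [].
set ny := normX cj absK RX y.
set nTy := enorm cj absK (Th *m y).
set s1 := Num.sqrt (1 + eps); set s2 := Num.sqrt (1 - eps).
have s1p : 0 < s1 by rewrite sqrtr_gt0; lra.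
have s2p : 0 < s2 by rewrite sqrtr_gt0; lra.
have ny0 : 0 <= ny by apply: sqrtr_ge0.
have dXpos : forall x, 0 <= dotX cj RX x x.
  move=> x; have [->|xnz] := eqVneq x 0; first by rewrite /dotX mulmx0 dotK0r.
  exact/ltW/Hpd.
have EX : forall x, dotX cj RX x x = emb (normX cj absK RX x ^+ 2).
  by move=> x; rewrite sqr_sqrtr ?absK_ge0 // absK_pos.
have ET : forall x, dotK cj (Th *m x) (Th *m x) = emb (enorm cj absK (Th *m x) ^+ 2).
  by move=> x; rewrite sqr_sqrtr ?absK_ge0 // absK_pos // dotK_ge0.
have nXpos : forall x, x != 0 -> 0 < normX cj absK RX x.
  move=> x xnz; rewrite sqrtr_gt0 lt_def absK_ge0 andbT.
  apply/eqP => /absK_eq0 h; have := Hpd x xnz.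
  by rewrite -/(dotX cj RX x x) h ltxx.
have NB : forall x, inSub Y x ->
    enorm cj absK (Th *m x) <= s1 * normX cj absK RX x /\
    s2 * normX cj absK RX x <= enorm cj absK (Th *m x).
  move=> x xY; have := Hth x x xY xY; rewrite EX ET -rmorphB absK_emb.
  set a := normX cj absK RX x; set b := enorm cj absK (Th *m x).
  have a0 : 0 <= a by apply: sqrtr_ge0.
  have b0 : 0 <= b by apply: sqrtr_ge0.
  rewrite ler_norml => /andP[h1 h2].
  have Eb : b = Num.sqrt (b ^+ 2) by rewrite sqrtr_sqr ger0_norm.
  split.
    rewrite Eb /s1 -(ger0_norm a0) -sqrtr_sqr -sqrtrM; last lra.
    rewrite ler_sqrt; last by apply: mulr_ge0; [lra|apply: sqr_ge0].
    nra.
  rewrite Eb /s2 -(ger0_norm a0) -sqrtr_sqr -sqrtrM; last lra.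
  rewrite ler_sqrt; last by apply: sqr_ge0.
  nra.
have PX : forall x, inSub Z x -> x != 0 ->
  let p := absK (dotK cj (RX *m y) x) in
  let q := absK (dotK cj (Th *m y) (Th *m x)) in
  let nX := normX cj absK RX x in
  let nT := enorm cj absK (Th *m x) in
  [/\ p/nX <= s1 * (q/nT) + eps*ny, q/nT <= (p/nX + eps*ny)/s2 & q/nT <= nTy].
  move=> x xZ xnz p q nX nT.
  have xY : inSub Y x by apply: submx_trans HZY.
  have [hb1 hb2] := NB x xY.
  have nX0 := nXpos x xnz.
  have nT0 : 0 < nT by apply: lt_le_trans hb2; apply: mulr_gt0.
  have hc := Hth y x Hy xY.
  have hr1 := absK_rev (dotX cj RX y x) (dotK cj (Th *m y) (Th *m x)).
  have hr2 : absK (dotK cj (Th *m y) (Th *m x)) - absK (dotX cj RX y x)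
      <= absK (dotX cj RX y x - dotK cj (Th *m y) (Th *m x)).
    by rewrite -[absK (_ - _)]absKN opprB absK_rev.
  rewrite -/ny -/nX in hc.
  apply: scal_ineq => //; try exact: absK_ge0.
  - rewrite /p /q -/(dotX cj RX y x); lra.
  - rewrite /p /q -/(dotX cj RX y x); lra.
  - by rewrite /q /nT /nTy; apply: dotK_CS.
rewrite /normZd.
set SZ := [set r : R | exists x : 'cV_n, [/\ inSub Z x, x != 0 &
   r = absK (dotK cj (RX *m y) x) / normX cj absK RX x]].
set ST := [set r : R | exists x : 'cV_n, [/\ inSub Z x, x != 0 &
   r = absK (dotK cj (Th *m y) (Th *m x)) / enorm cj absK (Th *m x)]].
have [ex|nex] := pselect (exists x, inSub Z x /\ x != 0); last first.
  have -> : SZ = set0.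
    by apply/seteqP; split => r //= [x [zx xnz _]]; exfalso; apply: nex; exists x.
  have -> : ST = set0.
    by apply/seteqP; split => r //= [x [zx xnz _]]; exfalso; apply: nex; exists x.
  rewrite sup0; split.
    rewrite sub0r mulrN oppr_le0.
    by apply: mulr_ge0; [rewrite invr_ge0 ltW | apply: mulr_ge0].
  rewrite add0r.
  by apply: mulr_ge0; [rewrite invr_ge0 ltW | apply: mulr_ge0].
have [x0 [x0Z x0nz]] := ex.
have neZ : SZ !=set0 by eexists; exists x0; split.
have neT : ST !=set0 by eexists; exists x0; split.
have hST : has_ubound ST.
  by exists nTy => r [x [xZ xnz ->]]; have [] := PX x xZ xnz.
have hSZ : has_ubound SZ.
  exists (s1 * nTy + eps * ny) => r [x [xZ xnz ->]]; have [h1 _ h3] := PX x xZ xnz.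
  apply: le_trans h1 _; rewrite lerD2r ler_wpM2l // ltW //.
have low : sup SZ <= s1 * sup ST + eps * ny.
  apply: ge_sup => // r [x [xZ xnz ->]]; have [h1 _ _] := PX x xZ xnz.
  apply: le_trans h1 _; rewrite lerD2r; apply: ler_wpM2l; first exact: ltW.
  by apply: (ub_le_sup hST); exists x; split.
have up : sup ST <= (sup SZ + eps * ny) / s2.
  apply: ge_sup => // r [x [xZ xnz ->]]; have [_ h2 _] := PX x xZ xnz.
  apply: le_trans h2 _; apply: ler_wpM2r; first by rewrite invr_ge0 ltW.
  rewrite lerD2r.
  by apply: (ub_le_sup hSZ); exists x; split.
split; last by rewrite mulrC.
rewrite mulrC ler_pdivrMr //; lra.
Qed.
End Gen.

Local Open Scope complex_scope.

Theorem proposition3p4 (R : realType) : prop34_real R /\ prop34_complex R.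
Proof.
split.
  apply: (@gen_main R R id (fun z : R => `|z|) idfun) => //.
  by move=> z; rewrite /= -normrX ger0_norm ?sqr_ge0 // expr2.
apply: (@gen_main R R[i] (@conjc R) (@ComplexField.Normc.normc R) (real_complex R)).
- exact: rmorphD.
- exact: rmorphM.
- exact: conjcK.
- exact: conjc_real.
- move=> [a b]; rewrite normc_def /=; simpc.
  rewrite -rmorphXn sqr_sqrtr ?addr_ge0 ?sqr_ge0 //.
  by rewrite [b * a]mulrC subrr !expr2.
- by [].
- exact: lecR.
Qed.
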